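(* Let $k$ and $s$ be positive integers with $s\mid k$. Then for every integer $t$ with $0\le t\le s-1$, $$c_{s}(t)=\sum_{j=0}^{k/s-1}\sigma_{k}^{(0)}(js+t;s).$$
   Context: For a positive integer $m$, $(q)_m=(1-q)\cdots(1-q^m)$, $(q)_0=1$. For integers $k\ge1$ and $1\le s\le k$, $\sigma^{(0)}_k(t;s)$ ($0\le t\le k-1$) is the coefficient of $q^t$ in the remainder of $(q)_{s-1}$ upon division by $1-q^k$. $c_s(t)=\sum_{1\le h\le s,\ \gcd(h,s)=1}e^{2\pi i ht/s}$ is the Ramanujan sum. *)

(* Defs.v *)
From HB Require Import structures.
From mathcomp Require Import all_boot all_order all_algebra.
From mathcomp Require Import all_classical all_reals all_analysis.
From mathcomp Require Import complex.
Set Implicit Arguments. Unset Strict Implicit. Unset Printing Implicit Defensive.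
Import Order.TTheory GRing.Theory Num.Theory.
Local Open Scope ring_scope.

Definition qpoch (m : nat) : {poly int} := \prod_(1 <= i < m.+1) (1 - 'X^i).

Definition sigma0 (k s t : nat) : int := ((qpoch s.-1) %% (1 - 'X^k))`_t.

Definition ramanujan_sum (R : realType) (s : nat) (t : int) : R[i] :=
  \sum_(1 <= h < s.+1 | coprime h s)
    let x : R := 2 * pi * h%:R * t%:~R / s%:R in
    (Complex (cos x) (sin x)).

(* Main.v *)
Require Import Defs.
From HB Require Import structures.
From mathcomp Require Import all_boot all_order all_algebra.
From mathcomp Require Import all_classical all_reals all_analysis.
From mathcomp Require Import complex.
From mathcomp Require Import zify ring lra.
Set Implicit Arguments. Unset Strict Implicit. Unset Printing Implicit Defensive.
Import Order.TTheory GRing.Theory Num.Theory.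
Local Open Scope ring_scope.

Section Alg.
Variables (F : fieldType) (s : nat) (z : F).
Hypothesis pz : s.-primitive_root z.

Lemma orth_sum n : \sum_(m < s) z ^+ (m * n) = if (s %| n)%N then s%:R else 0.
Proof.
have s0 := prim_order_gt0 pz.
case: ifP => [dn|ndn].
  rewrite (eq_bigr (fun _ => 1)) ?sumr_const ?card_ord // => m _.
  by rewrite mulnC exprM; move: dn; rewrite (prim_order_dvd pz) => /eqP ->; rewrite expr1n.
have w1 : z ^+ n - 1 != 0 by rewrite subr_eq0 -(prim_order_dvd pz) ndn.
under eq_bigr => m _ do rewrite mulnC exprM.
apply: (mulfI w1); rewrite mulr0 -subrX1 -exprM mulnC exprM (prim_expr_order pz).
by rewrite expr1n subrr.
Qed.

Lemma split_sum (G : nat -> F) K :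
  \sum_(n < K * s) G n = \sum_(j < K) \sum_(u < s) G (j * s + u)%N.
Proof.
elim: K => [|K IH]; first by rewrite !big_ord0.
rewrite big_ord_recr /= -IH.
have -> : (K.+1 * s = K * s + s)%N by rewrite mulSn addnC.
by rewrite big_split_ord /=.
Qed.

Lemma dvd_shift j u t : (u < s)%N -> (t < s)%N ->
  (s %| (s - t) + (j * s + u))%N = (u == t).
Proof.
move=> us ts.
rewrite addnC.
rewrite -addnA dvdn_addr ?dvdn_mull //.
case: eqP => [->|ne]; first by rewrite subnKC ?dvdnn // ltnW.
apply/negP => /dvdnP [c hc].
have : c = 1%N by nia.
move=> c1; rewrite c1 mul1n in hc; lia.
Qed.

Lemma filter_coef (p : {poly F}) K t : (size p <= K * s)%N -> (t < s)%N ->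
  \sum_(m < s) z ^+ (m * (s - t)) * p.[z ^+ m] =
  s%:R * \sum_(j < K) p`_(j * s + t).
Proof.
move=> sp ts.
have us := ltn_ord.
under eq_bigr => m _ do rewrite (horner_coef_wide _ sp) (split_sum (fun i => p`_i * (z ^+ m) ^+ i)) big_distrr /=.
rewrite exchange_big /= big_distrr /=; apply: eq_bigr => j _.
rewrite (eq_bigr _ (fun m _ => big_distrr _ _ _)) /=.
rewrite exchange_big /=.
rewrite (bigD1 (Ordinal ts)) //= [X in _ + X]big1 ?addr0; last first.
  move=> u /eqP neu.
  under eq_bigr => m _ do rewrite mulrCA -exprM -exprD -mulnDr.
  rewrite -big_distrr /= orth_sum.
 rewrite dvd_shift //.
  case: eqP => [eut|]; last by rewrite mulr0.
  by exfalso; apply: neu; apply: val_inj.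
under eq_bigr => m _ do rewrite mulrCA -exprM -exprD -mulnDr.
by rewrite -big_distrr /= orth_sum dvd_shift // eqxx mulrC.
Qed.


Lemma prod_eval m : (m < s)%N ->
  \prod_(1 <= i < s) (1 - (z ^+ m) ^+ i) = if coprime m s then s%:R else 0.
Proof.
move=> ms; have s0 := prim_order_gt0 pz.
case: ifP => [cop|ncop].
  have pw : s.-primitive_root (z ^+ m) by rewrite prim_root_exp_coprime.
  have h := factor_Xn_sub_1 pw.
  rewrite big_ltn // expr0 polyC1 subrX1 in h.
  have nz : ('X - 1 : {poly F}) != 0 by rewrite -polyC1 polyXsubC_eq0.
  have h2 := mulfI nz h.
  have := congr1 (fun q => q.[1]) h2.
  rewrite /= horner_prod horner_sum.
  under eq_bigr => i _ do rewrite hornerXsubC.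
  move=> ->.
  under eq_bigr => i _ do rewrite hornerXn expr1n.
  by rewrite sumr_const card_ord.
apply/eqP; rewrite prodf_seq_eq0; apply/hasP.
set g := gcdn m s.
have g0 : (0 < g)%N by rewrite gcdn_gt0 s0 orbT.
have g1 : (1 < g)%N by move: ncop; rewrite /coprime -/g; case: g g0 => [|[|]].
have gs : (g <= s)%N by apply: dvdn_leq => //; apply: dvdn_gcdr.
exists (s %/ g)%N; first by rewrite mem_index_iota divn_gt0 // gs ltn_Pdiv.
rewrite /= -exprM muln_divCA_gcd -/g exprM (prim_expr_order pz) expr1n subrr.
by rewrite eqxx.
Qed.


Lemma reindex t : (t < s)%N ->
  \sum_(1 <= h < s.+1 | coprime h s) z ^+ (h * t) =
  \sum_(m < s | coprime m s) z ^+ (m * (s - t)).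
Proof.
move=> ts; have s0 := prim_order_gt0 pz.
rewrite big_add1 /= big_nat_rev /= big_mkord add0n.
apply: eq_big => [[m ms]|[m ms] _] /=.
  have -> : (s - m.+1).+1 = (s - m)%N by lia.
  rewrite /coprime.
  have e : s = ((s - m) + m)%N by rewrite subnK // ltnW.
  move: (s - m)%N e => a e; rewrite e gcdnDr addnC gcdnDr gcdnC //.
have -> : (s - m.+1).+1 = (s - m)%N by lia.
apply/eqP; rewrite (eq_prim_root_expr pz); apply/eqP.
rewrite -(modnMDl m ((s - m) * t)) -(modnMDl t (m * (s - t))).
congr (_ %% _)%N.
have e1 : s = ((s - m) + m)%N by rewrite subnK // ltnW.
have e2 : s = ((s - t) + t)%N by rewrite subnK // ltnW.
move: (s - m)%N (s - t)%N e1 e2 => a b e1 e2.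
rewrite e1 in e2 *; rewrite e2; nia.
Qed.

Lemma alg_main k t : (0 < k)%N -> (s %| k)%N -> (t < s)%N ->
  \sum_(1 <= h < s.+1 | coprime h s) z ^+ (h * t) =
  (\sum_(0 <= j < k %/ s) sigma0 k s (j * s + t))%:~R.
Proof.
move=> k0 sk ts; have s0 := prim_order_gt0 pz.
set K := (k %/ s)%N.
have kK : k = (K * s)%N by rewrite divnK.
set q : {poly int} := 1 - 'X^k.
set r := qpoch s.-1 %% q.
set rF := map_poly intr r : {poly F}.
have size_r : (size rF <= K * s)%N.
  have sq : size q = k.+1 by rewrite /q -opprB size_polyN -polyC1 size_XnsubC.
  have qnz : q != 0 by rewrite -size_poly_eq0 sq.
  have : (size r < k.+1)%N by rewrite -sq ltn_modp.
  rewrite ltnS -kK => /leq_sizeP hr; apply/leq_sizeP => j hj.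
  by rewrite coef_map /= hr.
have snz : s%:R != 0 :> F := prim_root_natf_neq0 pz.
apply: (mulfI snz).
rewrite rmorph_sum big_mkord /=.
have -> : \sum_(j < K) ((sigma0 k s (j * s + t))%:~R : F) =
          \sum_(j < K) rF`_(j * s + t).
  by apply: eq_bigr => j _; rewrite coef_map.
rewrite -filter_coef //.
have ev m : rF.[z ^+ m] = \prod_(1 <= i < s) (1 - (z ^+ m) ^+ i).
  have -> : rF = map_poly intr (qpoch s.-1) - map_poly intr (qpoch s.-1 %/ q) * map_poly intr q.
    have lq : lead_coef q \is a GRing.unit.
      by rewrite /q -opprB lead_coefN -polyC1 (monicP (monicXnsubC 1 k0)) unitrN1.
    by rewrite -rmorphM -rmorphB /rF /r {2}(Pdiv.IdomainUnit.divp_eq lq (qpoch s.-1)) addrC addKr.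
  rewrite hornerD hornerN hornerM.
  have -> : (map_poly intr q : {poly F}).[z ^+ m] = 0.
    rewrite /q rmorphB rmorph1 rmorphXn /= map_polyX hornerD hornerN hornerXn hornerC.
    by rewrite -exprM kK mulnA mulnC exprM (prim_expr_order pz) !expr1n subrr.
  rewrite mulr0 subr0 /qpoch prednK // rmorph_prod horner_prod.
  apply: eq_bigr => i _.
  by rewrite rmorphB rmorph1 rmorphXn /= map_polyX hornerD hornerN hornerXn hornerC.
rewrite (eq_bigr (fun m : 'I_s => z ^+ (m * (s - t)) * (if coprime m s then s%:R else 0))); last by move=> m _; rewrite ev prod_eval.
rewrite reindex // big_distrr /= big_mkcond /=.
apply: eq_bigr => m _; case: ifP => _; last by rewrite mulr0.
by rewrite mulrC.
Qed.

End Alg.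

Section Trig.
Variable R : realType.

Definition expi (x : R) : R[i] := Complex (cos x) (sin x).

Lemma expiD x y : expi (x + y) = expi x * expi y.
Proof.
rewrite /expi cosD sinD /=.
by congr Complex; rewrite addrC.
Qed.

Lemma expi0 : expi 0 = 1.
Proof. by rewrite /expi cos0 sin0. Qed.

Lemma expiMn n x : expi (n%:R * x) = expi x ^+ n.
Proof.
elim: n => [|n IH]; first by rewrite mul0r expi0 expr0.
by rewrite -natr1 mulrDl mul1r expiD IH exprSr.
Qed.

Lemma cos_lt1 (y : R) : 0 < y < pi *+ 2 -> cos y < 1.
Proof.
move=> /andP [y0 y2].
have pi0 := @pi_gt0 R.
have key w : 0 < w <= pi -> cos w < 1.
  move=> /andP [w0 wp].
  rewrite -[X in _ < X]cos0 ltr_cos // in_itv /= ?lexx ?(ltW w0) ?wp //=; apply: ltW; exact: pi_gt0.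
have [yp|py] := lerP y pi; first by apply: key; rewrite y0 yp.
have -> : cos y = cos (pi *+ 2 - y).
  by rewrite cosB cos2pi sin2pi mul1r mul0r addr0.
apply: key; apply/andP; split; rewrite mulr2n; lra.
Qed.

Lemma prim_zeta s : (0 < s)%N -> s.-primitive_root (expi (2 * pi / s%:R)).
Proof.
move=> s0.
rewrite /primitive_root_of_unity s0 /=; apply/forallP => i.
rewrite unity_rootE -expiMn.
have is_ := ltn_ord i.
have sR : (0 : R) < s%:R by rewrite ltr0n.
have [e|ne] := eqVneq i.+1 s.
  rewrite e.
  have -> : s%:R * (2 * pi / s%:R) = pi *+ 2 :> R.
    rewrite mulr2n; field; by rewrite lt0r_neq0.
  by rewrite /expi cos2pi sin2pi eqxx.
have lt : (i.+1 < s)%N by rewrite ltn_neqAle is_ andbT.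
rewrite eqbF_neg; apply/eqP => e.
have e' : Complex (cos (i.+1%:R * (2 * pi / s%:R))) (sin (i.+1%:R * (2 * pi / s%:R))) = Complex (1 : R) 0 := e.
case: e' => c1 _.
suff : cos ((i.+1)%:R * (2 * pi / s%:R)) < 1 :> R by rewrite c1 ltxx.
apply: cos_lt1.
have pi0 := @pi_gt0 R.
set c := (i.+1)%:R / (s%:R : R).
have c0 : 0 < c by rewrite divr_gt0 // ltr0n.
have c1' : c < 1 by rewrite ltr_pdivrMr // mul1r ltr_nat.
have -> : (i.+1)%:R * (2 * pi / s%:R) = 2 * pi * c.
  rewrite /c; field; by rewrite lt0r_neq0.
rewrite mulr2n; apply/andP; split; nra.
Qed.

End Trig.

Theorem proposition2p16 (R : realType) (k s : nat) :
  (0 < k)%N -> (0 < s)%N -> (s %| k)%N ->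
  forall t : nat, (t <= s - 1)%N ->
    ramanujan_sum R s t%:Z =
    ((\sum_(0 <= j < k %/ s) sigma0 k s (j * s + t)) %:~R : R[i]).
Proof.
move=> k0 s0 sk t ts.
have ts' : (t < s)%N by lia.
have pz := prim_zeta R s0.
rewrite -(alg_main pz k0 sk ts') /ramanujan_sum.
apply: eq_bigr => h _.
rewrite -expiMn /expi.
have sR : (s%:R : R) != 0 by rewrite pnatr_eq0 -lt0n.
have -> : 2 * pi * h%:R * (t%:Z)%:~R / s%:R = (h * t)%:R * (2 * pi / s%:R) :> R.
  rewrite natrM /=; field; exact: sR.
by [].
Qed.
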